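(* Let $\mathcal{A}=\{a_1,a_2,\ldots\}$ be a countably infinite set. Let $X$ be a discrete random variable taking values in $\{a_1,\ldots,a_m\}$ for some $m\in\mathbb{N}$, and let $Y$ be a discrete random variable taking values in $\mathcal{A}$. Assume that for some $\eta_1,\eta_2,\eta_3>0$ with $\eta_3\le\eta_2\le\eta_1<1$, $$\eta_2\le d_{\mathrm{TV}}(X,Y)\le\eta_1,\qquad d_{\mathrm{loc}}(X,Y)\le\eta_3.$$ Let $M$ be an integer such that $$\sum_{i=M}^\infty P_Y(a_i)\le\eta_3,\qquad M\ge\max\Bigl\{m+1,\ \frac{\eta_2}{(1-\eta_1)\eta_3}\Bigr\},$$ and let $\eta_4>0$ satisfy $-\sum_{i=M}^\infty P_Y(a_i)\log P_Y(a_i)\le\eta_4$. Then $$|H(X)-H(Y)|\le\eta_1\log\Bigl(\frac{M\eta_3}{\eta_2}-1\Bigr)+h(\eta_1)+\eta_4.$$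
   Context: For discrete random variables $X,Y$ on a set $\mathcal{A}$ with probability mass functions $P_X,P_Y$, the local distance is $d_{\mathrm{loc}}(X,Y) = \sup_{u\in\mathcal{A}} |P_X(u)-P_Y(u)|$ and the total variation distance is $d_{\mathrm{TV}}(X,Y) = \frac12\sum_{u\in\mathcal{A}}|P_X(u)-P_Y(u)|$. All logarithms are natural and entropies are in nats, with $0\log0=0$. $h(x) = -x\log x-(1-x)\log(1-x)$ denotes the binary entropy function. *)

(* Defs.v *)
From Stdlib Require Import Reals.
Open Scope R_scope.

(* The countable alphabet A = {a_1, a_2, ...} is identified with the
   indices 1, 2, 3, ... : nat.  Index 0 is a dummy point carrying no mass. *)

Definition is_pmf (p : nat -> R) : Prop :=
  p 0%nat = 0 /\ (forall i, 0 <= p i) /\ infinite_sum p 1.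

(* -x log x (natural log; Stdlib's ln 0 = 0, so 0 log 0 = 0). *)
Definition negxlogx (x : R) : R := - (x * ln x).

Definition h (x : R) : R := negxlogx x + negxlogx (1 - x).

Definition is_dTV (pX pY : nat -> R) (d : R) : Prop :=
  infinite_sum (fun i => Rabs (pX i - pY i) / 2) d.

Definition dloc_le (pX pY : nat -> R) (c : R) : Prop :=
  forall i, Rabs (pX i - pY i) <= c.

(* sum_{i = M}^infinity f(i) <= c, for a series of nonnegative terms
   (equivalently: all partial sums of the tail are <= c). *)
Definition tail_sum_le (f : nat -> R) (M : nat) (c : R) : Prop :=
  forall N, sum_f_R0 (fun k => f (M + k)%nat) N <= c.

Definition is_entropy (p : nat -> R) (H : R) : Prop :=
  infinite_sum (fun i => negxlogx (p i)) H.

(* Main.v *)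
Require Import Defs.
From Stdlib Require Import Reals Lra Lia Arith.
Open Scope R_scope.

Lemma ln_le' x y : 0 < x -> x <= y -> ln x <= ln y.
Proof. intros Hx Hxy. destruct (Rle_lt_or_eq_dec _ _ Hxy) as [H|H].
  - left. apply ln_increasing; lra.
  - subst; lra. Qed.

Lemma ln_le_sub1 x : 0 < x -> ln x <= x - 1.
Proof. intros Hx. pose proof (exp_ineq1_le (ln x)). rewrite exp_ln in H; lra. Qed.

Lemma gibbs a c : 0 <= a -> 0 <= c -> (0 < a -> 0 < c) -> a * (ln c - ln a) <= c - a.
Proof. intros Ha Hc Hac. destruct (Rle_lt_or_eq_dec _ _ Ha) as [Ha'|Ha'].
  - specialize (Hac Ha'). assert (E : c = a * (c / a)) by (field; lra).
    assert (Hca : 0 < c / a) by (apply Rdiv_lt_0_compat; lra).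
    rewrite E at 1. rewrite ln_mult by lra.
    pose proof (ln_le_sub1 _ Hca).
    replace (a * (ln a + ln (c / a) - ln a)) with (a * ln (c/a)) by ring.
    apply Rle_trans with (a * (c / a - 1)). apply Rmult_le_compat_l; lra.
    right. field. lra.
  - subst. lra. Qed.

Lemma phi0 : negxlogx 0 = 0.
Proof. unfold negxlogx. ring. Qed.

Lemma phi_sub a b : 0 <= a -> 0 <= b -> negxlogx (a + b) <= negxlogx a + negxlogx b.
Proof. intros Ha Hb. unfold negxlogx.
  assert (H1 : a * ln a <= a * ln (a + b)).
  { destruct (Rle_lt_or_eq_dec _ _ Ha) as [H|H]. apply Rmult_le_compat_l; [lra| apply ln_le'; lra].
    subst; lra. }
  assert (H2 : b * ln b <= b * ln (a + b)).
  { destruct (Rle_lt_or_eq_dec _ _ Hb) as [H|H]. apply Rmult_le_compat_l; [lra| apply ln_le'; lra].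
    subst; lra. }
  lra. Qed.

Lemma phi_low a e : 0 <= a -> a <= e -> 0 < e -> a * (- ln e) <= negxlogx a.
Proof. intros Ha Hae He. unfold negxlogx.
  destruct (Rle_lt_or_eq_dec _ _ Ha) as [H|H].
  - assert (ln a <= ln e) by (apply ln_le'; lra).
    assert (a * ln a <= a * ln e) by (apply Rmult_le_compat_l; lra). lra.
  - subst; lra. Qed.

Lemma phi_nonneg a : 0 <= a -> a <= 1 -> 0 <= negxlogx a.
Proof. intros. pose proof (phi_low a 1 H H0 ltac:(lra)). rewrite ln_1 in H1. lra. Qed.

Definition Dd a b := a * (ln (a + b) - ln a) + b * (ln (a + b) - ln b).

Lemma Dd_eq a b : Dd a b = negxlogx a + negxlogx b - negxlogx (a + b).
Proof. unfold Dd, negxlogx. ring. Qed.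

Lemma Dd_bound a b A : 0 <= a -> 0 <= b -> 0 < A -> A < 1 ->
  Dd a b <= a * (- ln A) + b * (- ln (1 - A)).
Proof. intros Ha Hb HA HA1. unfold Dd.
  assert (K : forall u v U, 0 <= u -> 0 <= v -> 0 < U ->
     u * (ln (u + v) - ln u) <= (u + v) * U - u - u * ln U).
  { intros u v U Hu Hv HU. destruct (Rle_lt_or_eq_dec _ _ Hu) as [H|H].
    - pose proof (gibbs u ((u+v)*U) Hu ltac:(nra) ltac:(intros; nra)).
      rewrite ln_mult in H0 by lra. lra.
    - subst. nra. }
  pose proof (K a b A Ha Hb HA). pose proof (K b a (1 - A) Hb Ha ltac:(lra)).
  replace (b + a) with (a + b) in H0 by ring. nra. Qed.

Lemma gibbs_w s w lam : 0 <= s -> 0 < lam -> (w = 1 \/ (w = 0 /\ s = 0)) ->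
  negxlogx s <= lam * w - s - s * ln lam.
Proof. intros Hs Hl [->| [-> ->]].
  - pose proof (gibbs s lam Hs ltac:(lra) ltac:(lra)). unfold negxlogx. lra.
  - rewrite phi0. lra. Qed.

Lemma sum_ext f g N : (forall i, (i <= N)%nat -> f i = g i) -> sum_f_R0 f N = sum_f_R0 g N.
Proof. induction N; intros H; simpl. apply H; lia. rewrite IHN by (intros; apply H; lia). rewrite H by lia. reflexivity. Qed.

Lemma sum_add f g N : sum_f_R0 (fun i => f i + g i) N = sum_f_R0 f N + sum_f_R0 g N.
Proof. induction N; simpl; [ring| rewrite IHN; ring]. Qed.
Lemma sum_sub f g N : sum_f_R0 (fun i => f i - g i) N = sum_f_R0 f N - sum_f_R0 g N.
Proof. induction N; simpl; [ring| rewrite IHN; ring]. Qed.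
Lemma sum_scal c f N : sum_f_R0 (fun i => c * f i) N = c * sum_f_R0 f N.
Proof. induction N; simpl; [ring| rewrite IHN; ring]. Qed.

Lemma sum_mono_n f n N : (forall i, 0 <= f i) -> (n <= N)%nat -> sum_f_R0 f n <= sum_f_R0 f N.
Proof. intros Hf H. induction H. lra. simpl. pose proof (Hf (S m)). lra. Qed.

Lemma sum_split f N k : sum_f_R0 f (S N + k) = sum_f_R0 f N + sum_f_R0 (fun j => f (S N + j)%nat) k.
Proof. induction k. simpl. rewrite Nat.add_0_r. reflexivity.
  rewrite Nat.add_succ_r, tech5, IHk. rewrite (tech5 (fun j => f (S N + j)%nat)). rewrite Nat.add_succ_r. ring. Qed.

Lemma sum_zero_after f N n : (forall i, (N < i)%nat -> f i = 0) -> (N <= n)%nat -> sum_f_R0 f n = sum_f_R0 f N.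
Proof. intros Hf H. induction H. reflexivity. simpl. rewrite IHle. rewrite Hf by lia. ring. Qed.

Lemma cv_ev u v l N : Un_cv u l -> (forall n, (n >= N)%nat -> v n = u n) -> Un_cv v l.
Proof. intros Hu Hv eps He. destruct (Hu eps He) as [N0 HN0]. exists (max N N0).
  intros n Hn. rewrite Hv by lia. apply HN0. lia. Qed.

Lemma cv_const c : Un_cv (fun _ => c) c.
Proof. intros eps He. exists 0%nat. intros. unfold R_dist. rewrite Rminus_diag, Rabs_R0. lra. Qed.

Lemma tailcv a y N c L : infinite_sum y L -> (forall i, (N < i)%nat -> a i = c * y i) ->
  infinite_sum a (sum_f_R0 (fun i => a i - c * y i) N + c * L).
Proof. intros Hy Ha.
  assert (Hc : Un_cv (fun n => sum_f_R0 (fun i => a i - c * y i) N + c * sum_f_R0 y n)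
            (sum_f_R0 (fun i => a i - c * y i) N + c * L)).
  { apply CV_plus. apply cv_const. apply (CV_mult (fun _ => c)). apply cv_const. exact Hy. }
  unfold infinite_sum. change (Un_cv (fun n => sum_f_R0 a n) (sum_f_R0 (fun i => a i - c * y i) N + c * L)).
  apply (cv_ev _ _ _ N Hc). intros n Hn.
  rewrite <- (sum_zero_after (fun i => a i - c * y i) N n); [| intros i Hi; rewrite Ha by lia; ring | lia].
  rewrite sum_sub, sum_scal. ring. Qed.
Lemma sum_nonneg f N : (forall i, 0 <= f i) -> 0 <= sum_f_R0 f N.
Proof. intros H; induction N; simpl; [apply H| pose proof (H (S N)); lra]. Qed.

Lemma term_le_sum f n : (forall i, 0 <= f i) -> f n <= sum_f_R0 f n.
Proof. intros H. destruct n; simpl. lra. pose proof (sum_nonneg f n H). lra. Qed.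

Lemma sum_lin3 a b c f g h N : sum_f_R0 (fun i => a * f i + b * g i + c * h i) N
  = a * sum_f_R0 f N + b * sum_f_R0 g N + c * sum_f_R0 h N.
Proof. induction N; simpl; [ring| rewrite IHN; ring]. Qed.

Lemma sum_le f g N : (forall i, (i <= N)%nat -> f i <= g i) -> sum_f_R0 f N <= sum_f_R0 g N.
Proof. apply sum_Rle. Qed.

Lemma sum_e N : sum_f_R0 (fun i => if (i =? 0)%nat then 0 else 1) N = INR N.
Proof. induction N. reflexivity. rewrite tech5, IHN, S_INR. simpl Nat.eqb. cbv beta iota. ring. Qed.

Lemma pmf_le1 p : is_pmf p -> forall i, p i <= 1.
Proof. intros [H0 [Hn Hs]] i.
  assert (Hg : Un_growing (fun n => sum_f_R0 p n)). { intro n. simpl. pose proof (Hn (S n)); lra. }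
  pose proof (growing_ineq _ _ Hg Hs i). pose proof (term_le_sum p i Hn). lra. Qed.

Lemma pw_facts x y e : 0 <= x -> 0 <= y -> Rabs (x - y) <= e ->
  let s := (Rabs (x - y) + x - y) / 2 in let t := (Rabs (x - y) - x + y) / 2 in
  let mi := (x + y - Rabs (x - y)) / 2 in
  0 <= s /\ 0 <= t /\ 0 <= mi /\ s <= e /\ t <= e /\ x = mi + s /\ y = mi + t /\
  (y < x -> t = 0) /\ (~ y < x -> s = 0) /\ (x < y -> s = 0) /\ (~ x < y -> t = 0).
Proof. intros Hx Hy He s t mi. unfold s, t, mi. destruct (Rcase_abs (x - y)) as [H|H].
  - rewrite Rabs_left by lra. rewrite Rabs_left in He by lra. repeat split; intros; try lra.
  - rewrite Rabs_right by lra. rewrite Rabs_right in He by lra. repeat split; intros; try lra. Qed.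

Lemma sum_le_lin f a b c g1 g2 g3 N : (forall i, (i <= N)%nat -> f i <= a * g1 i + b * g2 i + c * g3 i) ->
  sum_f_R0 f N <= a * sum_f_R0 g1 N + b * sum_f_R0 g2 N + c * sum_f_R0 g3 N.
Proof. intros H. rewrite <- sum_lin3. apply sum_le. exact H. Qed.
Lemma sum_ge_lin f a b c g1 g2 g3 N : (forall i, (i <= N)%nat -> a * g1 i + b * g2 i + c * g3 i <= f i) ->
  a * sum_f_R0 g1 N + b * sum_f_R0 g2 N + c * sum_f_R0 g3 N <= sum_f_R0 f N.
Proof. intros H. rewrite <- sum_lin3. apply sum_le. exact H. Qed.
Lemma div_le a b c : 0 < c -> a <= b * c -> a / c <= b.
Proof. intros. unfold Rdiv. replace b with (b*c*/c) by (field; lra).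
  apply Rmult_le_compat_r; [left; apply Rinv_0_lt_compat; lra | lra]. Qed.
Lemma le_div a b c : 0 < c -> a / c <= b -> a <= b * c.
Proof. intros. replace a with (a/c*c) by (field; lra). apply Rmult_le_compat_r; lra. Qed.
Lemma le_div2 a b c : 0 < c -> a * c <= b -> a <= b / c.
Proof. intros. replace a with (a*c/c) by (field; lra). unfold Rdiv. apply Rmult_le_compat_r; [left; apply Rinv_0_lt_compat; lra | lra]. Qed.

Theorem theorem5
  (pX pY : nat -> R) (m M : nat) (eta1 eta2 eta3 eta4 : R)
  (HpX : is_pmf pX) (HpY : is_pmf pY)
  (HXsupp : forall i, (m < i)%nat -> pX i = 0)
  (He3 : 0 < eta3) (He32 : eta3 <= eta2) (He21 : eta2 <= eta1) (He1 : eta1 < 1)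
  (He4 : 0 < eta4)
  (HTV : exists d, is_dTV pX pY d /\ eta2 <= d <= eta1)
  (Hloc : dloc_le pX pY eta3)
  (Htail : tail_sum_le pY M eta3)
  (HMm : (m + 1 <= M)%nat)
  (HMeta : eta2 / ((1 - eta1) * eta3) <= INR M)
  (Htailent : tail_sum_le (fun i => negxlogx (pY i)) M eta4) :
  exists HX HY, is_entropy pX HX /\ is_entropy pY HY /\
    Rabs (HX - HY) <= eta1 * ln (INR M * eta3 / eta2 - 1) + h eta1 + eta4.
Proof.
  pose proof (pmf_le1 _ HpX) as HxL1. pose proof (pmf_le1 _ HpY) as HyL1.
  destruct HpX as [Hx0 [Hxn Hxs]]. destruct HpY as [Hy0 [Hyn Hys]].
  destruct HTV as [d [Hd [Hd2 Hd1]]].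
  destruct M as [|N]; [lia|].
  assert (HXz : forall i, (N < i)%nat -> pX i = 0) by (intros; apply HXsupp; lia).
  assert (Hyt : forall i, (N < i)%nat -> pY i <= eta3).
  { intros i Hi. specialize (Hloc i). cbv beta in Hloc. rewrite HXz in Hloc by lia.
    rewrite Rminus_0_l, Rabs_Ropp, Rabs_right in Hloc by (apply Rle_ge; auto). exact Hloc. }
  assert (Sx : sum_f_R0 pX N = 1).
  { pose proof (tailcv pX pX N 0 1 Hxs ltac:(intros; rewrite HXz by lia; ring)) as H.
    pose proof (uniqueness_sum _ _ _ Hxs H).
    assert (sum_f_R0 (fun i => pX i - 0 * pX i) N = sum_f_R0 pX N) by (apply sum_ext; intros; ring). lra. }
  set (tau := 1 - sum_f_R0 pY N).
  assert (Hgy : Un_growing (fun n => sum_f_R0 pY n)) by (intro n; simpl; pose proof (Hyn (S n)); lra).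
  assert (Htau0 : 0 <= tau) by (pose proof (growing_ineq _ _ Hgy Hys N); unfold tau; lra).
  assert (Htau1 : tau <= 1) by (pose proof (sum_nonneg pY N Hyn); unfold tau; lra).
  assert (Htau3 : tau <= eta3).
  { assert (forall n, sum_f_R0 pY n <= sum_f_R0 pY N + eta3).
    { intro n. destruct (le_lt_dec n N).
      - pose proof (sum_mono_n pY n N Hyn l). lra.
      - replace n with (S N + (n - S N))%nat by lia. rewrite sum_split. pose proof (Htail (n - S N)%nat). lra. }
    pose proof (@Rle_cv_lim _ _ _ _ H Hys (cv_const _)). unfold tau; lra. }
  assert (Sabs : sum_f_R0 (fun i => Rabs (pX i - pY i)) N = 2 * d - tau).
  { pose proof (tailcv (fun i => Rabs (pX i - pY i) / 2) pY N (1/2) 1 Hys) as H.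
    assert (HH: forall i, (N < i)%nat -> Rabs (pX i - pY i) / 2 = 1/2 * pY i).
    { intros i Hi. rewrite HXz by lia. rewrite Rminus_0_l, Rabs_Ropp, Rabs_right by (apply Rle_ge; auto). field. }
    specialize (H HH). pose proof (uniqueness_sum _ _ _ Hd H).
    rewrite (sum_ext _ (fun i => (1/2) * Rabs (pX i - pY i) + (-1/2) * pY i + 0 * pY i)) in H0 by (intros; field).
    rewrite sum_lin3 in H0. unfold tau. lra. }
  pose (s := fun i => (Rabs (pX i - pY i) + pX i - pY i) / 2).
  pose (t := fun i => (Rabs (pX i - pY i) - pX i + pY i) / 2).
  pose (mi := fun i => (pX i + pY i - Rabs (pX i - pY i)) / 2).
  assert (PW : forall i, 0 <= s i /\ 0 <= t i /\ 0 <= mi i /\ s i <= eta3 /\ t i <= eta3 /\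
     pX i = mi i + s i /\ pY i = mi i + t i /\
    (pY i < pX i -> t i = 0) /\ (~ pY i < pX i -> s i = 0) /\ (pX i < pY i -> s i = 0) /\ (~ pX i < pY i -> t i = 0)).
  { intro i. exact (pw_facts (pX i) (pY i) eta3 (Hxn i) (Hyn i) (Hloc i)). }
  assert (Ssum : sum_f_R0 s N = d).
  { rewrite (sum_ext _ (fun i => (1/2) * Rabs (pX i - pY i) + (1/2) * pX i + (-1/2) * pY i)) by (intros; unfold s; field).
    rewrite sum_lin3. unfold tau in Sabs. lra. }
  assert (Tsum : sum_f_R0 t N = d - tau).
  { rewrite (sum_ext _ (fun i => (1/2) * Rabs (pX i - pY i) + (-1/2) * pX i + (1/2) * pY i)) by (intros; unfold t; field).
    rewrite sum_lin3. unfold tau in *. lra. }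
  assert (Msum : sum_f_R0 mi N = 1 - d).
  { rewrite (sum_ext _ (fun i => (-1/2) * Rabs (pX i - pY i) + (1/2) * pX i + (1/2) * pY i)) by (intros; unfold mi; field).
    rewrite sum_lin3. unfold tau in *. lra. }
  pose (w := fun i => if Rlt_dec (pY i) (pX i) then 1 else 0).
  pose (w' := fun i => if Rlt_dec (pX i) (pY i) then 1 else 0).
  pose (e := fun i : nat => if (i =? 0)%nat then 0 else 1).
  assert (Se : sum_f_R0 e N = INR N) by exact (sum_e N).
  assert (We : forall i, w i = 1 \/ (w i = 0 /\ s i = 0)).
  { intro i. destruct (PW i) as (_&_&_&_&_&_&_&_&H&_). unfold w. destruct (Rlt_dec (pY i) (pX i)); auto. }
  assert (We' : forall i, w' i = 1 \/ (w' i = 0 /\ t i = 0)).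
  { intro i. destruct (PW i) as (_&_&_&_&_&_&_&_&_&_&H). unfold w'. destruct (Rlt_dec (pX i) (pY i)); auto. }
  assert (E0 : forall i, (i = 0%nat /\ e i = 0 /\ s i = 0 /\ t i = 0) \/ e i = 1).
  { intros [|i]; [left | right; reflexivity]. unfold e, s, t. rewrite Hx0, Hy0.
    replace (Rabs (0 - 0)) with 0 by (rewrite Rminus_diag, Rabs_R0; reflexivity). simpl. repeat split; field. }
  assert (A6pw : forall i, t i <= eta3 * e i - eta3 * w i).
  { intro i. destruct (PW i) as (Hs&Ht&_&Hs3&Ht3&_&_&H1&H2&_). unfold w.
    destruct (Rlt_dec (pY i) (pX i)) as [r|r].
    - destruct (E0 i) as [( -> & _ ) | -> ]. rewrite Hx0, Hy0 in r; lra. rewrite H1 by auto; lra.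
    - destruct (E0 i) as [(_ & -> & _ & -> ) | -> ]; lra. }
  assert (B6pw : forall i, s i <= eta3 * e i - eta3 * w' i).
  { intro i. destruct (PW i) as (Hs&Ht&_&Hs3&Ht3&_&_&_&_&H1&H2). unfold w'.
    destruct (Rlt_dec (pX i) (pY i)) as [r|r].
    - destruct (E0 i) as [( -> & _ ) | -> ]. rewrite Hx0, Hy0 in r; lra. rewrite H1 by auto; lra.
    - destruct (E0 i) as [(_ & -> & -> & _ ) | -> ]; lra. }
  assert (A7pw : forall i, s i <= eta3 * w i).
  { intro i. destruct (PW i) as (Hs&Ht&_&Hs3&Ht3&_). destruct (We i) as [->|[-> ->]]; lra. }
  set (Fy := sum_f_R0 (fun i => negxlogx (pY i)) N).
  set (Fx := sum_f_R0 (fun i => negxlogx (pX i)) N).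
  assert (HXent : is_entropy pX Fx).
  { pose proof (tailcv (fun i => negxlogx (pX i)) pX N 0 1 Hxs
       ltac:(intros; cbv beta; rewrite HXz by lia; rewrite phi0; ring)) as H.
    assert (sum_f_R0 (fun i => negxlogx (pX i) - 0 * pX i) N + 0 * 1 = Fx).
    { unfold Fx. rewrite Rmult_0_l, Rplus_0_r. apply sum_ext; intros; ring. }
    cbv beta in H. rewrite H0 in H. exact H. }
  assert (Hphiy : forall i, 0 <= negxlogx (pY i)) by (intro i; apply phi_nonneg; auto).
  assert (Hbd : forall n, sum_f_R0 (fun i => negxlogx (pY i)) n <= Fy + eta4).
  { intro n. destruct (Nat.le_gt_cases n N).
    - pose proof (sum_mono_n (fun i => negxlogx (pY i)) n N Hphiy H). unfold Fy; lra.
    - replace n with (S N + (n - S N))%nat by lia. rewrite sum_split. pose proof (Htailent (n - S N)%nat).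
      unfold Fy; lra. }
  assert (Hgphi : Un_growing (fun n => sum_f_R0 (fun i => negxlogx (pY i)) n)).
  { intro n. simpl. pose proof (Hphiy (S n)). lra. }
  assert (Hub : has_ub (fun n => sum_f_R0 (fun i => negxlogx (pY i)) n)).
  { exists (Fy + eta4). intros x [n ->]. apply Hbd. }
  destruct (growing_cv _ Hgphi Hub) as [HY HHY].
  assert (HYup : HY <= Fy + eta4) by exact (@Rle_cv_lim _ _ _ _ Hbd HHY (cv_const _)).
  set (L := - ln eta3).
  assert (HYlow : Fy + L * tau <= HY).
  { pose (g := fun i => if (i <=? N)%nat then negxlogx (pY i) else L * pY i).
    pose proof (tailcv g pY N L 1 Hys) as H.
    assert (HH : forall i, (N < i)%nat -> g i = L * pY i).
    { intros i Hi. unfold g. replace (i <=? N)%nat with false; [reflexivity|]. symmetry. apply Nat.leb_gt. lia. }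
    specialize (H HH).
    assert (E : sum_f_R0 (fun i => g i - L * pY i) N = sum_f_R0 (fun i => 1 * negxlogx (pY i) + (-L) * pY i + 0 * pY i) N).
    { apply sum_ext. intros i Hi. unfold g. replace (i <=? N)%nat with true; [ring|]. symmetry. apply Nat.leb_le. lia. }
    rewrite E, sum_lin3 in H.
    assert (forall n, sum_f_R0 g n <= sum_f_R0 (fun i => negxlogx (pY i)) n).
    { intro n. apply sum_le. intros i _. unfold g. destruct (Nat.leb_spec i N). lra.
      rewrite Rmult_comm. apply phi_low; auto. }
    pose proof (@Rle_cv_lim _ _ _ _ H0 H HHY). unfold Fy, tau in *. lra. }
  assert (Hd0 : 0 < d) by lra.
  assert (Hd1' : d < 1) by lra.
  set (W := sum_f_R0 w N). set (W' := sum_f_R0 w' N).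
  set (Fs := sum_f_R0 (fun i => negxlogx (s i)) N).
  set (Ft := sum_f_R0 (fun i => negxlogx (t i)) N).
  set (Fm := sum_f_R0 (fun i => negxlogx (mi i)) N).
  assert (A6 : d - tau <= eta3 * INR N - eta3 * W).
  { rewrite <- Tsum, <- Se. unfold W.
    pose proof (sum_le_lin t eta3 (-eta3) 0 e w w N ltac:(intros i _; pose proof (A6pw i); lra)). lra. }
  assert (B6 : d <= eta3 * INR N - eta3 * W').
  { rewrite <- Ssum, <- Se. unfold W'.
    pose proof (sum_le_lin s eta3 (-eta3) 0 e w' w' N ltac:(intros i _; pose proof (B6pw i); lra)). lra. }
  assert (A7 : d <= eta3 * W).
  { rewrite <- Ssum. unfold W.
    pose proof (sum_le_lin s eta3 0 0 w w w N ltac:(intros i _; pose proof (A7pw i); lra)). lra. }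
  set (V := INR N + 1 - d / eta3).
  assert (HeV : eta3 * V = eta3 * INR N + eta3 - d) by (unfold V; field; lra).
  assert (HV : 0 < V) by nra.
  assert (HWV : W <= V).
  { apply (Rmult_le_reg_l eta3); lra. }
  assert (HWV' : W' + 1 <= V).
  { apply (Rmult_le_reg_l eta3); lra. }
  set (lam := d / V).
  assert (Hlam : 0 < lam) by (unfold lam; apply Rdiv_lt_0_compat; lra).
  assert (HlamV : lam * V = d) by (unfold lam; field; lra).
  assert (HlamW : lam * W <= d) by (rewrite <- HlamV; apply Rmult_le_compat_l; lra).
  assert (HlamW' : lam * (W' + 1) <= d) by (rewrite <- HlamV; apply Rmult_le_compat_l; lra).
  assert (Hlnlam : ln lam = ln d - ln V).
  { unfold lam, Rdiv. rewrite ln_mult, ln_Rinv; try lra. apply Rinv_0_lt_compat; lra. }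
  set (DA := sum_f_R0 (fun i => Dd (mi i) (t i)) N).
  set (DB := sum_f_R0 (fun i => Dd (mi i) (s i)) N).
  assert (A1 : Fx <= Fs + Fm).
  { unfold Fx, Fs, Fm. pose proof (sum_le_lin (fun i => negxlogx (pX i)) 1 1 0 (fun i => negxlogx (s i))
      (fun i => negxlogx (mi i)) (fun i => negxlogx (mi i)) N) as H.
    cbv beta in H. enough (HH : forall i, (i <= N)%nat -> negxlogx (pX i) <= 1 * negxlogx (s i) + 1 * negxlogx (mi i) + 0 * negxlogx (mi i)) by (specialize (H HH); lra).
    intros i _. destruct (PW i) as (Hs&Ht&Hm&_&_&Hx&_). rewrite Hx. pose proof (phi_sub (mi i) (s i) Hm Hs). lra. }
  assert (B1 : Fy <= Ft + Fm).
  { unfold Fy, Ft, Fm. pose proof (sum_le_lin (fun i => negxlogx (pY i)) 1 1 0 (fun i => negxlogx (t i))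
      (fun i => negxlogx (mi i)) (fun i => negxlogx (mi i)) N) as H.
    cbv beta in H. enough (HH : forall i, (i <= N)%nat -> negxlogx (pY i) <= 1 * negxlogx (t i) + 1 * negxlogx (mi i) + 0 * negxlogx (mi i)) by (specialize (H HH); lra).
    intros i _. destruct (PW i) as (Hs&Ht&Hm&_&_&_&Hy&_). rewrite Hy. pose proof (phi_sub (mi i) (t i) Hm Ht). lra. }
  assert (A2 : Fy = Fm + Ft - DA).
  { unfold Fy, Fm, Ft, DA.
    rewrite (sum_ext _ (fun i => 1 * negxlogx (mi i) + 1 * negxlogx (t i) + (-1) * Dd (mi i) (t i))).
    rewrite sum_lin3; ring. intros i _. destruct (PW i) as (_&_&_&_&_&_&Hy&_). rewrite Dd_eq, Hy. ring. }
  assert (B2 : Fx = Fm + Fs - DB).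
  { unfold Fx, Fm, Fs, DB.
    rewrite (sum_ext _ (fun i => 1 * negxlogx (mi i) + 1 * negxlogx (s i) + (-1) * Dd (mi i) (s i))).
    rewrite sum_lin3; ring. intros i _. destruct (PW i) as (_&_&_&_&_&Hx&_). rewrite Dd_eq, Hx. ring. }
  assert (A3 : DA <= - ln (1 - d) * (1 - d) + - ln d * (d - tau)).
  { unfold DA.
    pose proof (sum_le_lin (fun i => Dd (mi i) (t i)) (- ln (1 - d)) (- ln d) 0 mi t t N) as H.
    enough (HH : forall i, (i <= N)%nat -> Dd (mi i) (t i) <= - ln (1 - d) * mi i + - ln d * t i + 0 * t i) by (specialize (H HH); rewrite Msum, Tsum in H; lra).
    intros i _. destruct (PW i) as (Hs&Ht&Hm&_). pose proof (Dd_bound (mi i) (t i) (1 - d) Hm Ht ltac:(lra) ltac:(lra)).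
    replace (1 - (1 - d)) with d in H0 by ring. lra. }
  assert (B3 : DB <= - ln (1 - d) * (1 - d) + - ln d * d).
  { unfold DB.
    pose proof (sum_le_lin (fun i => Dd (mi i) (s i)) (- ln (1 - d)) (- ln d) 0 mi s s N) as H.
    enough (HH : forall i, (i <= N)%nat -> Dd (mi i) (s i) <= - ln (1 - d) * mi i + - ln d * s i + 0 * s i) by (specialize (H HH); rewrite Msum, Ssum in H; lra).
    intros i _. destruct (PW i) as (Hs&Ht&Hm&_). pose proof (Dd_bound (mi i) (s i) (1 - d) Hm Hs ltac:(lra) ltac:(lra)).
    replace (1 - (1 - d)) with d in H0 by ring. lra. }
  assert (A4 : Fs <= lam * W - d - d * ln lam).
  { unfold Fs, W.
    pose proof (sum_le_lin (fun i => negxlogx (s i)) lam (-1) (- ln lam) w s s N) as H.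
    enough (HH : forall i, (i <= N)%nat -> negxlogx (s i) <= lam * w i + -1 * s i + - ln lam * s i) by (specialize (H HH); rewrite Ssum in H; lra).
    intros i _. destruct (PW i) as (Hs&_). pose proof (gibbs_w (s i) (w i) lam Hs Hlam (We i)). lra. }
  assert (B4 : Ft <= lam * W' - (d - tau) - (d - tau) * ln lam).
  { unfold Ft, W'.
    pose proof (sum_le_lin (fun i => negxlogx (t i)) lam (-1) (- ln lam) w' t t N) as H.
    enough (HH : forall i, (i <= N)%nat -> negxlogx (t i) <= lam * w' i + -1 * t i + - ln lam * t i) by (specialize (H HH); rewrite Tsum in H; lra).
    intros i _. destruct (PW i) as (_&Ht&_). pose proof (gibbs_w (t i) (w' i) lam Ht Hlam (We' i)). lra. }
  assert (A5 : L * (d - tau) <= Ft).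
  { unfold Ft.
    pose proof (sum_ge_lin (fun i => negxlogx (t i)) L 0 0 t t t N) as H.
    enough (HH : forall i, (i <= N)%nat -> L * t i + 0 * t i + 0 * t i <= negxlogx (t i)) by (specialize (H HH); rewrite Tsum in H; lra).
    intros i _. destruct (PW i) as (_&Ht&_&_&Ht3&_). pose proof (phi_low (t i) eta3 Ht Ht3 He3). unfold L. lra. }
  assert (B5 : L * d <= Fs).
  { unfold Fs.
    pose proof (sum_ge_lin (fun i => negxlogx (s i)) L 0 0 s s s N) as H.
    enough (HH : forall i, (i <= N)%nat -> L * s i + 0 * s i + 0 * s i <= negxlogx (s i)) by (specialize (H HH); rewrite Ssum in H; lra).
    intros i _. destruct (PW i) as (Hs&_&_&Hs3&_). pose proof (phi_low (s i) eta3 Hs Hs3 He3). unfold L. lra. }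
  assert (Bk : 0 <= lam - tau - tau * ln lam).
  { pose proof (gibbs_w tau 1 lam Htau0 Hlam (or_introl eq_refl)). pose proof (phi_nonneg tau Htau0 Htau1). lra. }
  assert (Hlnd : ln d <= 0) by (rewrite <- ln_1; apply ln_le'; lra).
  assert (Htlnd : tau * ln d <= 0) by nra.
  rewrite Hlnlam in A4, B4, Bk.
  set (G := d * (ln V + ln eta3 - ln d) + h d).
  assert (HA : Fx - HY <= G).
  { unfold G, h, negxlogx, L in *. lra. }
  assert (HB : HY - Fx <= G + eta4).
  { unfold G, h, negxlogx, L in *. lra. }
  exists Fx, HY. split; [exact HXent | split; [exact HHY | ]].
  assert (Habs : Rabs (Fx - HY) <= G + eta4) by (apply Rabs_le; lra).
  set (P := INR (S N)).
  assert (HP : P = INR N + 1) by (unfold P; apply S_INR).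
  set (K := P * eta3 / eta2 - 1).
  assert (Heq : P * eta3 / d - 1 = V * eta3 / d) by (unfold V; rewrite HP; field; lra).
  assert (Hpos : 0 < V * eta3 / d) by (apply Rdiv_lt_0_compat; nra).
  assert (Hln3 : ln (V * eta3 / d) = ln V + ln eta3 - ln d).
  { unfold Rdiv. rewrite ln_mult, ln_mult, ln_Rinv; try lra; try nra; try (apply Rinv_0_lt_compat; lra). }
  assert (HPn : 0 <= P) by (unfold P; apply pos_INR).
  assert (HVK : V * eta3 / d <= K).
  { rewrite <- Heq. unfold K. unfold Rdiv. assert (/ d <= / eta2) by (apply Rinv_le_contravar; lra).
    assert (0 <= P * eta3) by nra. nra. }
  assert (HlnK : ln V + ln eta3 - ln d <= ln K) by (rewrite <- Hln3; apply ln_le'; lra).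
  assert (Hmeta : eta2 <= P * ((1 - eta1) * eta3)) by (apply le_div; [nra | exact HMeta]).
  assert (HK1 : 1 <= P * eta3 * (1 - eta1) / eta2) by (apply le_div2; [lra | nra]).
  assert (HKe : K * (1 - eta1) = P * eta3 * (1 - eta1) / eta2 - (1 - eta1)) by (unfold K; field; lra).
  assert (HKpos : 0 < K) by nra.
  assert (Hlne1 : ln eta1 <= ln K + ln (1 - eta1)) by (rewrite <- ln_mult by lra; apply ln_le'; lra).
  assert (Hprod : 0 <= (eta1 - d) * (ln K + ln (1 - eta1) - ln eta1)) by (apply Rmult_le_pos; lra).
  assert (Hdk : d * (ln V + ln eta3 - ln d) <= d * ln K) by (apply Rmult_le_compat_l; lra).
  pose proof (gibbs d eta1 ltac:(lra) ltac:(lra) ltac:(lra)) as G1.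
  pose proof (gibbs (1 - d) (1 - eta1) ltac:(lra) ltac:(lra) ltac:(lra)) as G2.
  assert (G <= eta1 * ln K + h eta1) by (unfold G, h, negxlogx; nra).
  fold P. fold K. lra.
Qed.
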